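(* Let $n\ge 3$ and $m\ge 3$ with $n\equiv 1$ or $2 \pmod 4$ and $m\equiv 0\pmod 4$. Let $H$ be the graph obtained by identifying one vertex of the cycle $C_n$ with an endpoint of the path $P_m$ (a $1$-clique sum of $C_n$ and $P_m$). Then $v(H)=v(C_n)+v(P_{m-2})-1$.
   Context: For a proper graded ideal $I$ of a standard graded polynomial ring $S$ over a field, the $v$-number is $v(I)=\min\{k\ge 0 : \exists f\in S_k,\ \mathcal P\in\operatorname{Ass}(S/I) \text{ with } (I:f)=\mathcal P\}$. For a finite simple graph $G$, $I(G)$ is the edge ideal generated by $x_ix_j$ over edges $\{x_i,x_j\}$, and $v(G):=v(I(G))$. $P_k$ is the path on $k$ vertices and $C_n$ the cycle on $n$ vertices. A $1$-clique sum of $G_1,G_2$ is $G_1\cup G_2$ where $G_1\cap G_2$ is a single vertex and neither $G_i$ is a single vertex. *)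

(* Defs.v *)
From HB Require Import structures.
From mathcomp Require Import all_boot all_algebra.
From mathcomp Require Import mpoly.
From Stdlib Require Import ClassicalEpsilon.

Set Implicit Arguments.
Unset Strict Implicit.
Unset Printing Implicit Defensive.

Import GRing.Theory.
Local Open Scope ring_scope.

(* The standard graded polynomial ring S = k[x_0,...,x_{N-1}] is
   {mpoly k[N]}; subsets of S (in particular ideals) are predicates S -> Prop. *)

Section Ideals.
Variables (k : fieldType) (N : nat).
Local Notation S := {mpoly k[N]}.

Definition prime_ideal (P : S -> Prop) : Prop :=
  [/\ P 0,
      (forall a b, P a -> P b -> P (a + b)),
      (forall r a, P a -> P (r * a)),
      ~ P 1
    & (forall a b, P (a * b) -> P a \/ P b)].

Definition colon (I : S -> Prop) (f : S) : S -> Prop := fun g => I (g * f).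

Definition Ass (I : S -> Prop) (P : S -> Prop) : Prop :=
  prime_ideal P /\ exists f : S, forall g, P g <-> colon I f g.

Definition vnum_witness (I : S -> Prop) (d : nat) : Prop :=
  exists f : S, f \is d.-homog /\
    exists P, Ass I P /\ forall g, colon I f g <-> P g.

Definition is_vnumber (I : S -> Prop) (d : nat) : Prop :=
  vnum_witness I d /\ forall d', vnum_witness I d' -> (d <= d')%N.

Definition vnumber (I : S -> Prop) : nat :=
  epsilon (inhabits 0%N) (fun d => is_vnumber I d).

Definition edge_ideal (e : rel 'I_N) : S -> Prop :=
  fun p => exists c : 'I_N -> 'I_N -> S,
    p = \sum_(i : 'I_N) \sum_(j : 'I_N | e i j) c i j * ('X_i * 'X_j).

End Ideals.

Definition vG (k : fieldType) (N : nat) (e : rel 'I_N) : nat :=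
  vnumber (edge_ideal (k := k) e).

(* The cycle C_n on vertices 0..n-1 (edges {i, i+1 mod n}); simple for n >= 3 *)
Definition cycle_rel (n : nat) : rel 'I_n :=
  fun i j => (j == (i.+1 %% n)%N :> nat) || (i == (j.+1 %% n)%N :> nat).

Definition path_rel (n : nat) : rel 'I_n :=
  fun i j => (j == i.+1 :> nat) || (i == j.+1 :> nat).

(* The 1-clique sum H of C_n and P_m: vertices 0..n+m-2; vertices 0..n-1 form
   the cycle C_n, and vertices n-1, n, ..., n+m-2 form the path P_m, whose
   endpoint n-1 is identified with the cycle vertex n-1. *)
Definition cycle_path_rel (n m : nat) : rel 'I_(n + m - 1) :=
  fun i j =>
    [&& (i < n)%N, (j < n)%N &
        (j == (i.+1 %% n)%N :> nat) || (i == (j.+1 %% n)%N :> nat)]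
    || [&& (n.-1 <= i)%N, (n.-1 <= j)%N &
        (j == i.+1 :> nat) || (i == j.+1 :> nat)].

Arguments cycle_rel n : clear implicits.
Arguments path_rel n : clear implicits.
Arguments cycle_path_rel n m : clear implicits.
Arguments vG k {N} e.

(* Main.v *)
Require Import Defs.
From HB Require Import structures.
From mathcomp Require Import all_boot all_algebra.
From mathcomp Require Import mpoly.
From mathcomp Require Import zify.
From Stdlib Require Import ClassicalEpsilon.
Set Implicit Arguments.
Unset Strict Implicit.
Unset Printing Implicit Defensive.
Module AlgPart.
Import GRing.Theory.
Local Open Scope ring_scope.

Section Alg.
Variables (k : fieldType) (N : nat) (e : rel 'I_N).
Hypothesis esym : ssrbool.symmetric e.
Hypothesis eirr : irreflexive e.
Local Notation S := {mpoly k[N]}.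
Local Notation I := (edge_ideal (k := k) e).

Definition hasedge (m : 'X_{1..N}) : bool :=
  [exists i, [exists j, [&& e i j, (0 < m i)%N & (0 < m j)%N]]].

Lemma XU (i : 'I_N) : ('X_i : S) = 'X_[U_(i)].
Proof. by []. Qed.

Lemma I0 : I 0.
Proof. by exists (fun _ _ => 0); rewrite big1 // => i _; rewrite big1 // => j _; rewrite mul0r. Qed.

Lemma ID p q : I p -> I q -> I (p + q).
Proof.
move=> [c1 ->] [c2 ->]; exists (fun i j => c1 i j + c2 i j).
rewrite -big_split /=; apply: eq_bigr => i _; rewrite -big_split /=.
by apply: eq_bigr => j _; rewrite mulrDl.
Qed.

Lemma IM r p : I p -> I (r * p).
Proof.
move=> [c ->]; exists (fun i j => r * c i j).
rewrite mulr_sumr; apply: eq_bigr => i _; rewrite mulr_sumr.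
by apply: eq_bigr => j _; rewrite mulrA.
Qed.

Lemma IZ a p : I p -> I (a *: p).
Proof. by move=> h; rewrite -mul_mpolyC; apply: IM. Qed.

Lemma Isum (T : eqType) (r : seq T) (F : T -> S) :
  (forall x, x \in r -> I (F x)) -> I (\sum_(x <- r) F x).
Proof.
elim: r => [|x r IH] h; first by rewrite big_nil; apply: I0.
rewrite big_cons; apply: ID; first by apply: h; rewrite inE eqxx.
by apply: IH => y hy; apply: h; rewrite inE hy orbT.
Qed.

Lemma IXX i j : e i j -> I ('X_i * 'X_j).
Proof.
move=> hij; exists (fun a b => if (a == i) && (b == j) then 1 else 0).
rewrite (bigD1 i) //= [X in _ + X]big1 ?addr0; last first.
  move=> a /negbTE ha; rewrite big1 // => b _; by rewrite ha /= mul0r.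
rewrite (bigD1 j) //= [X in _ + X]big1 ?addr0; last first.
  move=> b /andP[_ /negbTE hb]; by rewrite eqxx hb /= mul0r.
by rewrite !eqxx mul1r.
Qed.

Lemma I2 m : hasedge m -> I 'X_[m].
Proof.
case/existsP=> i /existsP[j /and3P[hij hi hj]].
have nij : i != j by apply: contraTneq hij => ->; rewrite eirr.
have le : (U_(i) + U_(j) <= m)%MM.
  apply/mnm_lepP => l; rewrite mnmDE !mnm1E.
  case: (eqVneq i l) => [eil|ni]; case: (eqVneq j l) => [ejl|nj].
  - by move: nij; rewrite eil ejl eqxx.
  - by rewrite /= addn0 -eil.
  - by rewrite /= -ejl.
  - by [].
rewrite -(submK le) mpolyXD mpolyXD; apply: IM; exact: IXX.
Qed.

Lemma I3 g : (forall m, m \in msupp g -> hasedge m) -> I g.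
Proof.
move=> h; rewrite (mpolyE g); apply: Isum => m hm; apply: IZ; exact: I2 (h _ hm).
Qed.

Lemma I4 g m : I g -> m \in msupp g -> hasedge m.
Proof.
move=> [c ->]; apply: contraTT => hm; rewrite mcoeff_msupp negbK.
rewrite raddf_sum /= big1 // => i _; rewrite raddf_sum /= big1 // => j hij.
apply/eqP; rewrite mcoeff_eq0; apply: contra hm.
rewrite -mpolyXD (perm_mem (msuppMX _ _)) => /mapP[m' _ ->].
apply/existsP; exists i; apply/existsP; exists j; rewrite hij !mnmDE !mnm1E !eqxx.
by case: (j == i); case: (i == j).
Qed.


Definition nbrs (B : {set 'I_N}) := [set j | [exists b in B, e b j]].
Definition good (B : {set 'I_N}) :=
  (forall i j, i \in B -> j \in B -> ~~ e i j) /\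
  (forall i j, e i j -> (i \in nbrs B) || (j \in nbrs B)).

Definition meets (C : {set 'I_N}) (m : 'X_{1..N}) := [exists i in C, (0 < m i)%N].
Definition tC (C : {set 'I_N}) : N.-tuple S :=
  [tuple (if i \in C then 0 else 'X_i) | i < N].

Lemma phiX C m : 'X_[m] \mPo (tC C) = if meets C m then 0 else 'X_[m].
Proof.
rewrite comp_mpolyX; case: ifP => [/existsP[i /andP[iC mi]]|nm].
  rewrite (bigD1 i) //= tnth_mktuple iC expr0n.
  by rewrite (negbTE (lt0n_neq0 mi)) mul0r.
rewrite [RHS]mpolyXE_id; apply: eq_bigr => i _; rewrite tnth_mktuple.
case: ifP => // iC; have -> : m i = 0%N.
  by apply/eqP; rewrite -leqn0 leqNgt; apply: contraFN nm => h; apply/existsP; exists i; rewrite iC.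
by rewrite !expr0.
Qed.

Lemma phi0 C g : g \mPo (tC C) = 0 <-> (forall m, m \in msupp g -> meets C m).
Proof.
split; last first.
  move=> h; rewrite comp_mpolyEX big1_seq // => m /andP[_ hm].
  by rewrite phiX h // scaler0.
move=> h0 m hm; apply: contraT => nm.
have := congr1 (mcoeff m) h0; rewrite mcoeff0 comp_mpolyEX raddf_sum /=.
rewrite (bigD1_seq m) ?msupp_uniq //= big1 ?addr0; last first.
  move=> m' nm'; rewrite mcoeffZ phiX; case: ifP => _; first by rewrite mcoeff0 mulr0.
  by rewrite mcoeffX (negbTE nm') mulr0.
rewrite mcoeffZ phiX (negbTE nm) mcoeffX eqxx mulr1 => /eqP.
by rewrite mcoeff_eq0 hm.
Qed.

Lemma prime_phi C (P : S -> Prop) : (forall g, P g <-> g \mPo (tC C) = 0) -> prime_ideal P.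
Proof.
move=> hP; split.
- by apply/hP; rewrite comp_mpoly0.
- by move=> a b /hP ha /hP hb; apply/hP; rewrite comp_mpolyD ha hb addr0.
- by move=> r a /hP ha; apply/hP; rewrite (fst (comp_mpoly_is_multiplicative _)) ha mulr0.
- by move/hP; rewrite comp_mpoly1 => /eqP; rewrite oner_eq0.
- move=> a b /hP; rewrite (fst (comp_mpoly_is_multiplicative _)) => /eqP; rewrite mulf_eq0 => /orP[] /eqP h.
  + by left; apply/hP.
  + by right; apply/hP.
Qed.


Definition mB (B : {set 'I_N}) : 'X_{1..N} := [multinom ((i \in B) : nat) | i < N].

Lemma mBE B i : mB B i = (i \in B).
Proof. by rewrite /mB mnmE. Qed.

Lemma mdeg_mB B : mdeg (mB B) = #|B|.
Proof.
rewrite mdegE -sum1_card [RHS]big_mkcond /=; apply: eq_bigr => i _.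
by rewrite mBE; case: (i \in B).
Qed.

Lemma colon_char B g : good B ->
  (I (g * 'X_[mB B]) <-> g \mPo (tC (nbrs B)) = 0).
Proof.
move=> [hind hcov]; rewrite phi0; split.
- move=> h m hm.
  have hs : (mB B + m)%MM \in msupp (g * 'X_[mB B]).
    by rewrite mcoeff_msupp mcoeffMX -mcoeff_msupp.
  case/existsP: (I4 h hs) => i /existsP[j /and3P[hij hi hj]].
  rewrite !mnmDE !mBE in hi hj.
  case: (boolP (i \in B)) => iB; case: (boolP (j \in B)) => jB.
  + by move: (hind i j iB jB); rewrite hij.
  + apply/existsP; exists j; rewrite /nbrs inE.
    rewrite (negbTE jB) /= in hj; rewrite hj andbT.
    by apply/existsP; exists i; rewrite iB hij.
  + apply/existsP; exists i; rewrite /nbrs inE.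
    rewrite (negbTE iB) /= in hi; rewrite hi andbT.
    by apply/existsP; exists j; rewrite jB esym hij.
  + rewrite (negbTE iB) /= in hi; rewrite (negbTE jB) /= in hj.
    case/orP: (hcov i j hij) => hn; apply/existsP; [exists i|exists j];
      by rewrite hn.
- move=> h; apply: I3 => m'; rewrite (perm_mem (msuppMX _ _)).
  case/mapP=> m hm ->; case/existsP: (h m hm) => c /andP[].
  rewrite /nbrs inE => /existsP[b /andP[bB hbc]] hc.
  apply/existsP; exists b; apply/existsP; exists c.
  by rewrite hbc !mnmDE !mBE bB /= addn_gt0 hc orbT.
Qed.

Lemma witness B : good B -> vnum_witness I #|B|.
Proof.
move=> hB; exists (mpolyX k (mB B)); split.
  by apply/dhomogP => m; rewrite msuppX inE => /eqP ->; exact: mdeg_mB.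
exists (colon I 'X_[mB B]); split; last by [].
split; last by exists 'X_[mB B].
apply: (@prime_phi (nbrs B)) => g; exact: colon_char.
Qed.

Lemma lower d : vnum_witness I d -> exists B, good B /\ (#|B| <= d)%N.
Proof.
move=> [f [hom [P [[[P0 Padd Pmul P1 Pprime] _] hfP]]]].
have nIf : ~ I f.
  by move=> hf; apply: P1; apply/hfP; rewrite /colon mul1r.
have : ~~ all hasedge (msupp f).
  apply/negP => /allP h; apply: nIf; apply: I3 => m hm; exact: h m hm.
case/allPn => u hu nu.
exists [set i | (0 < u i)%N]; split; last first.
  have hd : mdeg u = d := dhomog_mf hom hu.
  rewrite -hd mdegE -sum1_card big_mkcond /=.
  by apply: leq_sum => i _; rewrite inE; case: (u i).
have key a : P 'X_a -> a \in nbrs [set i | (0 < u i)%N].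
  move/hfP; rewrite /colon => ha.
  have hs : (U_(a) + u)%MM \in msupp ('X_a * f).
    by rewrite mulrC mcoeff_msupp mcoeffMX -mcoeff_msupp.
  case/existsP: (I4 ha hs) => i /existsP[j /and3P[hij hi hj]].
  rewrite !mnmDE !mnm1E in hi hj.
  case: (eqVneq a i) => [ai|ai]; case: (eqVneq a j) => [aj|aj].
  + by move: hij; rewrite -ai -aj eirr.
  + rewrite (negbTE aj) /= in hj; rewrite /nbrs inE; apply/existsP; exists j.
    by rewrite inE hj esym ai hij.
  + rewrite (negbTE ai) /= in hi; rewrite /nbrs inE; apply/existsP; exists i.
    by rewrite inE hi aj hij.
  + rewrite (negbTE ai) (negbTE aj) /= in hi hj; case/negP: nu.
    by apply/existsP; exists i; apply/existsP; exists j; rewrite hij hi hj.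
split.
  move=> i j; rewrite !inE => hi hj; apply/negP => hij; case/negP: nu.
  by apply/existsP; exists i; apply/existsP; exists j; rewrite hij hi hj.
move=> i j hij.
have : P ('X_i * 'X_j).
  by apply/hfP; rewrite /colon mulrC; apply: IM; exact: IXX.
by case/Pprime => /key ->; rewrite ?orbT.
Qed.

Lemma vG_eq d : (exists B, good B /\ #|B| = d) -> (forall B, good B -> (d <= #|B|)%N) ->
  vnumber I = d.
Proof.
move=> [B [hB <-]] hmin.
have hv : is_vnumber I #|B|.
  split; first exact: witness.
  move=> d' /lower [B' [hB' le]]; exact: leq_trans (hmin _ hB') le.
rewrite /vnumber.
have := epsilon_spec (inhabits 0%N) (fun d => is_vnumber I d) (ex_intro _ _ hv).
move=> [hx1 hx2]; apply/eqP; rewrite eqn_leq (hx2 _ hv.1) (hv.2 _ hx1).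
by [].
Qed.

End Alg.

End AlgPart.
Import AlgPart.


Section Comb.
Variables (N : nat) (e : rel 'I_N).
Hypothesis esym : ssrbool.symmetric e.

Definition deg v := #|[set w | e v w]|.

Lemma degE v : deg v = \sum_w (e v w : nat).
Proof. by rewrite /deg -sum1_card big_mkcond /=; apply: eq_bigr => w _; rewrite inE; case: (e v w). Qed.

Lemma sum_sub (A : {set 'I_N}) (F : 'I_N -> nat) : \sum_(w in A) F w <= \sum_w F w.
Proof. by rewrite [X in _ <= X](bigID (mem A)) /= leq_addr. Qed.

Lemma count1 B : good e B -> #|nbrs e B| <= \sum_(b in B) deg b.
Proof.
move=> hB; rewrite -sum1_card.
apply: (@leq_trans (\sum_(v in nbrs e B) \sum_(b in B) (e b v : nat))).
  apply: leq_sum => v; rewrite /nbrs inE => /existsP[b /andP[bB hbv]].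
  by rewrite (bigD1 b) //= hbv.
rewrite exchange_big /=; apply: leq_sum => b _; rewrite degE; exact: sum_sub.
Qed.

Lemma count2 B : good e B ->
  \sum_(w in ~: nbrs e B) deg w <= \sum_(v in nbrs e B) deg v.
Proof.
move=> [_ hcov].
have -> : \sum_(w in ~: nbrs e B) deg w =
          \sum_(w in ~: nbrs e B) \sum_(v in nbrs e B) (e w v : nat).
  apply: eq_bigr => w; rewrite inE => hw; rewrite degE (bigID (mem (nbrs e B))) /=.
  rewrite [X in _ + X]big1 ?addn0 // => v hv.
  case: (boolP (e w v)) => // hwv; move: (hcov _ _ hwv).
  by rewrite (negbTE hw) (negbTE hv).
rewrite exchange_big /=; apply: leq_sum => v _; rewrite degE.
apply: leq_trans (sum_sub _ _) _; apply: eq_leq; apply: eq_bigr => w _.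
by rewrite esym.
Qed.

Lemma sum_eq1 (c : 'I_N) : \sum_w ((w == c) : nat) = 1.
Proof. by rewrite -big_mkcond /= big_pred1_eq. Qed.

Lemma sum_up (A : {set 'I_N}) c (fl : bool) :
  (forall w, deg w <= 2 + (fl && (w == c))) -> \sum_(w in A) deg w <= 2 * #|A| + fl.
Proof.
move=> h; apply: (@leq_trans (\sum_(w in A) (2 + (fl && (w == c))))).
  by apply: leq_sum => w _; apply: h.
rewrite big_split /= -sum1_card big_distrr /= muln1 leq_add2l.
apply: leq_trans (sum_sub _ _) _.
move: {h} fl; case; last by rewrite big1.
by rewrite (eq_bigr (fun w => ((w == c) : nat))) // sum_eq1.
Qed.

Lemma sum_lo (A : {set 'I_N}) a b (fa fb : bool) :
  (forall w, 2 <= deg w + (fa && (w == a)) + (fb && (w == b))) ->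
  2 * #|A| <= \sum_(w in A) deg w + fa + fb.
Proof.
move=> h; apply: (@leq_trans (\sum_(w in A) (deg w + (fa && (w == a)) + (fb && (w == b))))).
  by rewrite -sum1_card big_distrr /= muln1; apply: leq_sum => w _; apply: h.
clear h.
rewrite !big_split /= -addnA -[X in _ <= X]addnA leq_add2l.
apply: leq_add.
  apply: leq_trans (sum_sub _ _) _; case: fa; last by rewrite big1.
  by rewrite (eq_bigr (fun w => ((w == a) : nat))) // sum_eq1.
apply: leq_trans (sum_sub _ _) _; case: fb; last by rewrite big1.
by rewrite (eq_bigr (fun w => ((w == b) : nat))) // sum_eq1.
Qed.

Lemma bound B c a b (fl fa fb : bool) : good e B ->
  (forall w, deg w <= 2 + (fl && (w == c))) ->
  (forall w, 2 <= deg w + (fa && (w == a)) + (fb && (w == b))) ->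
  2 * N <= 8 * #|B| + 5 * fl + fa + fb.
Proof.
move=> hB hup hlo.
have h1 := count1 hB; have h2 := count2 hB.
have h3 := sum_up B hup; have h4 := sum_up (nbrs e B) hup.
have h5 := sum_lo (~: nbrs e B) hlo.
have h6 := cardsC (nbrs e B); rewrite card_ord in h6.
clear hup hlo; move: h3 h4 h5; case: fl; case: fa; case: fb => /= h3 h4 h5.
all: set x1 := \sum_(b in B) deg b in h1 h3; set x2 := \sum_(w in ~: nbrs e B) deg w in h2 h5; set x3 := \sum_(v in nbrs e B) deg v in h2 h4.
all: set y1 := #|nbrs e B| in h1 h4 h6; set y2 := #|~: nbrs e B| in h5 h6. all: lia.
Qed.

Lemma card_le_seq (A : {set 'I_N}) (h : nat -> nat) (s : seq nat) :
  {in A &, forall i j, h (val i) = h (val j) -> i = j} ->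
  (forall i, i \in A -> h (val i) \in s) -> #|A| <= size s.
Proof.
move=> hinj hs; rewrite cardE -(size_map (fun i => h (val i))).
apply: uniq_leq_size.
  rewrite map_inj_in_uniq ?enum_uniq // => i j; rewrite !mem_enum; exact: hinj.
by move=> x /mapP[i]; rewrite mem_enum => /hs hi ->.
Qed.

Lemma deg_le v (s : seq nat) : (forall w, e v w -> (w : nat) \in s) -> deg v <= size s.
Proof.
move=> h; apply: (@card_le_seq _ id) => [i j _ _ /val_inj //|i]; rewrite inE; exact: h.
Qed.

Lemma deg_ge2 v a b (ha : a < N) (hb : b < N) : a != b ->
  e v (Ordinal ha) -> e v (Ordinal hb) -> 2 <= deg v.
Proof.
move=> nab h1 h2; rewrite /deg.
have <- : #|[set Ordinal ha; Ordinal hb]| = 2 by rewrite cards2 -val_eqE /= nab.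
by apply: subset_leq_card; apply/subsetP => w; rewrite !inE => /orP[] /eqP ->.
Qed.

Lemma deg_ge1 v a (ha : a < N) : e v (Ordinal ha) -> 1 <= deg v.
Proof.
move=> h1; rewrite /deg; apply/card_gt0P; exists (Ordinal ha); by rewrite inE.
Qed.

Lemma in_nbrs (B : {set 'I_N}) v b (hb : b < N) : Ordinal hb \in B -> e (Ordinal hb) v ->
  v \in nbrs e B.
Proof. by move=> h1 h2; rewrite inE; apply/existsP; exists (Ordinal hb); rewrite h1. Qed.


Lemma good_gen (P : pred nat) (Q : pred nat) (w : nat -> nat) :
  (forall i j : 'I_N, P i -> P j -> ~~ e i j) ->
  (forall i j : 'I_N, e i j -> Q i || Q j) ->
  (forall v : 'I_N, Q v -> exists hb : w v < N, P (w v) && e (Ordinal hb) v) ->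
  good e [set x : 'I_N | P x].
Proof.
move=> hind hQ hw; split.
  by move=> i j; rewrite !inE; apply: hind.
move=> i j /hQ /orP[] /hw [hb /andP[hP he]]; apply/orP; [left|right];
  by apply: (in_nbrs (hb := hb)) => //; rewrite inE.
Qed.

Lemma card_gen (P : pred nat) (h : nat -> nat) K :
  (forall i j : 'I_N, P i -> P j -> h i = h j -> i = j) ->
  (forall i : 'I_N, P i -> h i < K) -> #|[set x : 'I_N | P x]| <= K.
Proof.
move=> hinj hK; rewrite -(size_iota 0 K); apply: (card_le_seq (h := h)).
  by move=> i j; rewrite !inE; apply: hinj.
by move=> i; rewrite inE mem_iota add0n => /hK ->.
Qed.

End Comb.

Lemma ordEq N (w : 'I_N) a (ha : a < N) : (w == Ordinal ha) = ((w : nat) == a).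
Proof. by apply/eqP/eqP => [->//|h]; exact: ord_inj. Qed.


Lemma modS i n : i < n -> i.+1 %% n = if i.+1 == n then 0 else i.+1.
Proof. move=> h; case: eqP => [->|ne]; first by rewrite modnn. by rewrite modn_small //; lia. Qed.

Section Cyc.
Variable n : nat.
Hypothesis hn : 2 < n.

Lemma cycE (i j : 'I_n) : cycle_rel n i j =
  [|| (j : nat) == i.+1, (i : nat) == j.+1, ((i.+1 == n) && (j == 0 :> nat)) | ((j.+1 == n) && (i == 0 :> nat))].
Proof.
have hi := ltn_ord i; have hj := ltn_ord j.
rewrite /cycle_rel !modS //; case: ifP; case: ifP; lia.
Qed.

Lemma cyc_sym : ssrbool.symmetric (cycle_rel n).
Proof. by move=> i j; rewrite /cycle_rel orbC. Qed.

Lemma cyc_irr : irreflexive (cycle_rel n).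
Proof. move=> i; have hi := ltn_ord i; rewrite cycE; lia. Qed.

Lemma cyc_deg_up (c w : 'I_n) : deg (cycle_rel n) w <= 2 + (false && (w == c)).
Proof.
have hw := ltn_ord w.
apply: (@leq_trans (size [:: (if w.+1 == n then 0 else w.+1); (if w == 0 :> nat then n.-1 else w.-1)])) => //.
apply: deg_le => x; have hx := ltn_ord x; rewrite cycE !inE; case: ifP; case: ifP; lia.
Qed.

Lemma cyc_deg_lo (c w : 'I_n) : 2 <= deg (cycle_rel n) w + (false && (w == c)) + (false && (w == c)).
Proof.
have hw := ltn_ord w; rewrite !addn0.
set a := if w.+1 == n then 0 else w.+1.
set b := if w == 0 :> nat then n.-1 else w.-1.
have ha : a < n by rewrite /a; case: ifP; lia.
have hb : b < n by rewrite /b; case: ifP; lia.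
apply: (@deg_ge2 _ _ w a b ha hb).
- rewrite /a /b; case: ifP; case: ifP; lia.
- rewrite cycE /= /a; case: ifP; lia.
- rewrite cycE /= /b; case: ifP; lia.
Qed.

Lemma cyc_lower B : good (cycle_rel n) B -> n <= 4 * #|B|.
Proof.
move=> hB; have c : 'I_n := Ordinal (leq_trans (isT : 1 <= 3) hn).
have := bound cyc_sym hB (cyc_deg_up c) (cyc_deg_lo c); lia.
Qed.

Hypothesis hn4 : (n %% 4 == 1) || (n %% 4 == 2).

Definition PC : pred nat := fun i => (i %% 4 == 1) || ((n %% 4 == 1) && (i == n - 2)).

Lemma cyc_good : good (cycle_rel n) [set x : 'I_n | PC x].
Proof.
apply: (@good_gen _ _ PC (fun v => v %% 2 == 0)
   (fun v => if (v %% 4 == 0) && (v.+1 < n) then v.+1 else v.-1)).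
- move=> i j; have := ltn_ord i; have := ltn_ord j; rewrite /PC cycE; lia.
- move=> i j; have := ltn_ord i; have := ltn_ord j; rewrite cycE; lia.
- move=> v hv; have hvn := ltn_ord v.
  have hb : (if (v %% 4 == 0) && (v.+1 < n) then v.+1 else v.-1) < n.
    case: ifP; lia.
  exists hb; rewrite /PC cycE /=; move: hv; case: ifP; lia.
Qed.

Lemma cyc_card : #|[set x : 'I_n | PC x]| <= n %/ 4 + 1.
Proof.
apply: (@card_gen _ _ (fun i => i.+1 %/ 4)).
- move=> i j; have := ltn_ord i; have := ltn_ord j; rewrite /PC => *; apply: ord_inj; lia.
- move=> i; have := ltn_ord i; rewrite /PC; lia.
Qed.

Lemma vG_cyc (k : fieldType) : vG k (cycle_rel n) = n %/ 4 + 1.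
Proof.
apply: vG_eq; [exact: cyc_sym|exact: cyc_irr| |].
- exists [set x : 'I_n | PC x]; split; first exact: cyc_good.
  have h2 := cyc_lower cyc_good; have h1 := cyc_card.
  set c := #|[set x : 'I_n | PC x]| in h1 h2 *; lia.
- move=> B /cyc_lower; lia.
Qed.

End Cyc.


Section Path.
Variable K : nat.
Hypothesis hK : 1 < K.
Hypothesis hK4 : K %% 4 == 2.

Lemma path_sym : ssrbool.symmetric (path_rel K).
Proof. by move=> i j; rewrite /path_rel orbC. Qed.

Lemma path_irr : irreflexive (path_rel K).
Proof. move=> i; rewrite /path_rel; lia. Qed.

Lemma path_deg_up (c w : 'I_K) : deg (path_rel K) w <= 2 + (false && (w == c)).
Proof.
apply: (@leq_trans (size [:: w.+1; w.-1])) => //.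
apply: deg_le => x; rewrite /path_rel !inE; lia.
Qed.

Let a0 : 'I_K := Ordinal (ltnW hK).
Let hb0 : K.-1 < K. Proof. lia. Qed.
Let b0 : 'I_K := Ordinal hb0.

Lemma path_deg_lo (w : 'I_K) : 2 <= deg (path_rel K) w + (true && (w == a0)) + (true && (w == b0)).
Proof.
have hw := ltn_ord w; rewrite /= !ordEq.
case: (eqVneq (w : nat) 0) => w0.
  have h1 : 1 < K by [].
  have e1 : path_rel K w (Ordinal h1) by rewrite /path_rel /=; lia.
  have := deg_ge1 e1; lia.
case: (eqVneq (w : nat) K.-1) => w1.
  have h1 : K.-2 < K by lia.
  have e1 : path_rel K w (Ordinal h1) by rewrite /path_rel /=; lia.
  have := deg_ge1 e1; lia.
have h1 : w.+1 < K by lia.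
have h2 : w.-1 < K by lia.
have e1 : path_rel K w (Ordinal h1) by rewrite /path_rel /=; lia.
have e2 : path_rel K w (Ordinal h2) by rewrite /path_rel /=; lia.
have := deg_ge2 (_ : w.+1 != w.-1) e1 e2; lia.
Qed.

Lemma path_lower B : good (path_rel K) B -> (K + 2) %/ 4 <= #|B|.
Proof.
move=> hB; have := bound path_sym hB (path_deg_up a0) path_deg_lo; lia.
Qed.

Definition PP : pred nat := fun i => i %% 4 == 1.

Lemma path_good : good (path_rel K) [set x : 'I_K | PP x].
Proof.
apply: (@good_gen _ _ PP (fun v => v %% 2 == 0)
   (fun v => if v %% 4 == 0 then v.+1 else v.-1)).
- move=> i j; rewrite /PP /path_rel; lia.
- move=> i j; rewrite /path_rel; lia.
- move=> v hv; have hvn := ltn_ord v.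
  have hb : (if v %% 4 == 0 then v.+1 else v.-1) < K.
    case: ifP; lia.
  exists hb; rewrite /PP /path_rel /=; move: hv; case: ifP; lia.
Qed.

Lemma path_card : #|[set x : 'I_K | PP x]| <= (K + 2) %/ 4.
Proof.
apply: (@card_gen _ _ (fun i => i %/ 4)).
- move=> i j; rewrite /PP => *; apply: ord_inj; lia.
- move=> i; have := ltn_ord i; rewrite /PP; lia.
Qed.

Lemma vG_path (k : fieldType) : vG k (path_rel K) = (K + 2) %/ 4.
Proof.
apply: vG_eq; [exact: path_sym|exact: path_irr| |].
- exists [set x : 'I_K | PP x]; split; first exact: path_good.
  have h2 := path_lower path_good; have h1 := path_card.
  set c := #|[set x : 'I_K | PP x]| in h1 h2 *; lia.
- move=> B /path_lower; lia.
Qed.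

End Path.


Section CP.
Variables n m : nat.
Hypothesis hn : 2 < n.
Hypothesis hm : 2 < m.
Hypothesis hn4 : (n %% 4 == 1) || (n %% 4 == 2).
Hypothesis hm4 : m %% 4 == 0.
Local Notation V := (n + m - 1).

Lemma cpE (i j : 'I_V) : cycle_path_rel n m i j =
  [|| [&& (i : nat) < n, (j : nat) < n &
        [|| (j : nat) == i.+1, (i : nat) == j.+1, ((i.+1 == n) && (j == 0 :> nat)) | ((j.+1 == n) && (i == 0 :> nat))]]
   | [&& n.-1 <= i, n.-1 <= j & ((j : nat) == i.+1) || ((i : nat) == j.+1)]].
Proof.
rewrite /cycle_path_rel; case: (ltnP i n) => hi; case: (ltnP j n) => hj /=.
- rewrite !modS //; case: ifP; case: ifP; lia.
- lia.
- lia.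
- lia.
Qed.

Lemma cp_sym : ssrbool.symmetric (cycle_path_rel n m).
Proof. move=> i j; rewrite !cpE; lia. Qed.

Lemma cp_irr : irreflexive (cycle_path_rel n m).
Proof. move=> i; rewrite cpE; lia. Qed.

Let hc0 : n.-1 < V. Proof. lia. Qed.
Let c0 : 'I_V := Ordinal hc0.
Let hz0 : V.-1 < V. Proof. lia. Qed.
Let z0 : 'I_V := Ordinal hz0.

Lemma cp_deg_up (w : 'I_V) : deg (cycle_path_rel n m) w <= 2 + (true && (w == c0)).
Proof.
have hw := ltn_ord w; rewrite /= ordEq.
case: (eqVneq (w : nat) n.-1) => h.
  apply: (@leq_trans (size [:: w.+1; w.-1; 0])); last by [].
  apply: deg_le => x; rewrite cpE !inE; lia.
case: (eqVneq (w : nat) 0) => h0.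
  apply: (@leq_trans (size [:: 1; n.-1])); last by [].
  apply: deg_le => x; rewrite cpE !inE; lia.
apply: (@leq_trans (size [:: w.+1; w.-1])); last by [].
apply: deg_le => x; rewrite cpE !inE; lia.
Qed.

Lemma cp_deg_lo (w : 'I_V) :
  2 <= deg (cycle_path_rel n m) w + (true && (w == z0)) + (false && (w == z0)).
Proof.
have hw := ltn_ord w; rewrite /= ordEq addn0.
case: (eqVneq (w : nat) 0) => w0.
  have h1 : 1 < V by lia.
  have h2 : n.-1 < V by lia.
  have e1 : cycle_path_rel n m w (Ordinal h1) by rewrite cpE /=; lia.
  have e2 : cycle_path_rel n m w (Ordinal h2) by rewrite cpE /=; lia.
  have := deg_ge2 (_ : 1 != n.-1) e1 e2; lia.
case: (eqVneq (w : nat) V.-1) => w1.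
  have h1 : V.-2 < V by lia.
  have e1 : cycle_path_rel n m w (Ordinal h1) by rewrite cpE /=; lia.
  have := deg_ge1 e1; lia.
have h1 : w.+1 < V by lia.
have h2 : w.-1 < V by lia.
have e1 : cycle_path_rel n m w (Ordinal h1) by rewrite cpE /=; lia.
have e2 : cycle_path_rel n m w (Ordinal h2) by rewrite cpE /=; lia.
have := deg_ge2 (_ : w.+1 != w.-1) e1 e2; lia.
Qed.

Lemma cp_lower B : good (cycle_path_rel n m) B -> V <= 4 * #|B| + 3.
Proof.
move=> hB; have := bound cp_sym hB cp_deg_up cp_deg_lo; lia.
Qed.

Definition PH : pred nat := fun i => i %% 4 == n %% 4.

Lemma cp_good : good (cycle_path_rel n m) [set x : 'I_V | PH x].
Proof.
apply: (@good_gen _ _ PH (fun v => (v %% 4 == (n + 1) %% 4) || (v %% 4 == (n + 3) %% 4))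
   (fun v => if v %% 4 == (n + 1) %% 4 then v.-1 else v.+1)).
- move=> i j; have := ltn_ord i; have := ltn_ord j; rewrite /PH cpE; lia.
- move=> i j; have := ltn_ord i; have := ltn_ord j; rewrite cpE; lia.
- move=> v hv; have hvn := ltn_ord v.
  have hb : (if v %% 4 == (n + 1) %% 4 then v.-1 else v.+1) < V.
    move: hv; case: ifP; lia.
  exists hb; rewrite /PH cpE /=; move: hv; case: ifP; lia.
Qed.

Lemma cp_card : #|[set x : 'I_V | PH x]| <= n %/ 4 + m %/ 4.
Proof.
apply: (@card_gen _ _ (fun i => i %/ 4)).
- move=> i j; rewrite /PH => *; apply: ord_inj; lia.
- move=> i; have := ltn_ord i; rewrite /PH; lia.
Qed.

Lemma vG_cp (k : fieldType) : vG k (cycle_path_rel n m) = n %/ 4 + m %/ 4.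
Proof.
apply: vG_eq; [exact: cp_sym|exact: cp_irr| |].
- exists [set x : 'I_V | PH x]; split; first exact: cp_good.
  have h2 := cp_lower cp_good; have h1 := cp_card.
  set c := #|[set x : 'I_V | PH x]| in h1 h2 *; lia.
- move=> B /cp_lower; lia.
Qed.

End CP.


Theorem corollary3p8 (k : fieldType) (n m : nat) :
  (3 <= n)%N -> (3 <= m)%N ->
  (n %% 4 == 1)%N || (n %% 4 == 2)%N -> (m %% 4 == 0)%N ->
  (vG k (cycle_path_rel n m) + 1 =
   vG k (cycle_rel n) + vG k (path_rel (m - 2)))%N.
Proof.
move=> hn hm hn4 hm4.
rewrite (@vG_cp n m hn hm hn4 hm4 k) (@vG_cyc n hn hn4 k).
have hK : (1 < m - 2)%N by lia.
have hK4 : ((m - 2) %% 4 == 2)%N by lia.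
rewrite (@vG_path (m - 2) hK hK4 k).
lia.
Qed.
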